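(* Let $\Omega\subseteq\mathbb C^d$ be an irreducible bounded symmetric domain and $\mathbb K$ the group of linear biholomorphic automorphisms of $\Omega$. Let $\mathcal H_K(\Omega,\mathbb C^n)$ be a reproducing kernel Hilbert space of holomorphic functions on $\Omega$ with values in $\mathbb C^n$ and reproducing kernel $K:\Omega\times\Omega\to\mathcal M_n(\mathbb C)$. Assume that $\mathbb C^n\otimes\mathcal P$ (the $\mathbb C^n$-valued polynomials) is densely contained in $\mathcal H_K(\Omega,\mathbb C^n)$, that the $d$-tuple $\boldsymbol M$ of multiplication by the coordinate functions on $\mathcal H_K(\Omega,\mathbb C^n)$ is bounded, and that $K$ is normalized at $0$, i.e. $K(\boldsymbol z,0)=I_n$ for all $\boldsymbol z\in\Omega$. Then the following are equivalent: (1) $\boldsymbol M$ is $\mathbb K$-homogeneous, i.e. for each $k\in\mathbb K$ there is a unitary $\Gamma(k)$ on $\mathcal H_K(\Omega,\mathbb C^n)$ with $\Gamma(k)(k\cdot\boldsymbol M)\Gamma(k)^*=\boldsymbol M$; (2) $K$ is quasi-invariant under $\mathbb K$ with a multiplier $c:\mathbb K\times\Omega\to\mathcal U(n)$ such that $c(k,\boldsymbol z)$ is independent of $\boldsymbol z$; (3) there is a map $c:\mathbb K\to\mathcal U(n)$ such that for each $k\in\mathbb K$ the operator $(\Gamma(k)f)(\boldsymbol z):=c(k)f(k^{-1}\cdot\boldsymbol z)$ is unitary on $\mathcal H_K(\Omega,\mathbb C^n)$.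
   Context: For $k\in\mathbb K$, $k\cdot\boldsymbol z=(k_1(\boldsymbol z),\ldots,k_d(\boldsymbol z))$ with $k_j$ linear, and $k\cdot\boldsymbol M=(k_1(\boldsymbol M),\ldots,k_d(\boldsymbol M))$. $K$ is quasi-invariant under $\mathbb K$ with multiplier $c$ if $K(\boldsymbol z,\boldsymbol w)=c(k,\boldsymbol z)K(k^{-1}\cdot\boldsymbol z,k^{-1}\cdot\boldsymbol w)c(k,\boldsymbol w)^*$ for all $k\in\mathbb K$, $\boldsymbol z,\boldsymbol w\in\Omega$. *)

(* Defs.v *)
From HB Require Import structures.
From mathcomp Require Import all_boot all_order all_algebra.
From mathcomp Require Import complex.
From mathcomp Require Import all_classical all_reals all_analysis.
Set Implicit Arguments. Unset Strict Implicit. Unset Printing Implicit Defensive.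
Import Order.TTheory GRing.Theory Num.Theory.
Import numFieldNormedType.Exports.
Local Open Scope ring_scope.
Local Open Scope complex_scope.
Local Open Scope classical_set_scope.

Section Defs.
Variable R : realType.
Local Notation C := (R[i]).

(* C^d as a normed space over C (not over R) *)
Definition CnormV (d : nat) := [the normedModType C of 'rV[C]_d].

Definition holomorphic_on (d p q : nat)
  (U : set 'rV[C]_d) (f : 'rV[C]_d -> 'M[C]_(p, q)) : Prop :=
  forall z, U z -> differentiable f (z : CnormV d).

Definition domain (d : nat) (U : set 'rV[C]_d) : Prop :=
  open (U : set (CnormV d)) /\ connected (U : set (CnormV d)) /\ U !=set0.

Definition bounded_set (d : nat) (U : set 'rV[C]_d) : Prop :=
  exists r : C, forall z, U z -> `|(z : CnormV d)| <= r.

Definition biholomorphic (d m : nat) (U : set 'rV[C]_d) (V : set 'rV[C]_m)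
  (f : 'rV[C]_d -> 'rV[C]_m) : Prop :=
  exists g : 'rV[C]_m -> 'rV[C]_d,
    holomorphic_on U f /\ holomorphic_on V g /\
    (forall z, U z -> V (f z)) /\ (forall w, V w -> U (g w)) /\
    (forall z, U z -> g (f z) = z) /\ (forall w, V w -> f (g w) = w).

Definition bounded_symmetric_domain (d : nat) (U : set 'rV[C]_d) : Prop :=
  domain U /\ bounded_set U /\
  forall p, U p -> exists s : 'rV[C]_d -> 'rV[C]_d,
    biholomorphic U U s /\ (forall z, U z -> s (s z) = z) /\ s p = p /\
    exists e : C, 0 < e /\
      forall z, U z -> z != p -> `|(z - p : CnormV d)| < e -> s z != z.

Definition prod_set (d1 d2 : nat) (U1 : set 'rV[C]_d1) (U2 : set 'rV[C]_d2)
  : set 'rV[C]_(d1 + d2) :=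
  [set z | U1 (lsubmx z) /\ U2 (rsubmx z)].

Definition irreducible_BSD (d : nat) (U : set 'rV[C]_d) : Prop :=
  (0 < d)%N /\ bounded_symmetric_domain U /\
  ~ (exists (d1 d2 : nat) (U1 : set 'rV[C]_d1) (U2 : set 'rV[C]_d2)
        (f : 'rV[C]_d -> 'rV[C]_(d1 + d2)),
        (0 < d1)%N /\ (0 < d2)%N /\
        bounded_symmetric_domain U1 /\ bounded_symmetric_domain U2 /\
        biholomorphic U (prod_set U1 U2) f).

(* Harish-Chandra (standard circular) realization: 0 \in U and U is circular *)
Definition circular_at_0 (d : nat) (U : set 'rV[C]_d) : Prop :=
  U 0 /\ forall (t : C) z, `|t| = 1 -> U z -> U (t *: z).

(* the group K of linear biholomorphic automorphisms of U: z |-> z *m A *)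
Definition linAut (d : nat) (U : set 'rV[C]_d) (A : 'M[C]_d) : Prop :=
  A \in unitmx /\ (fun z => z *m A) @` U = U.

Definition adjM (p q : nat) (A : 'M[C]_(p, q)) : 'M[C]_(q, p) :=
  map_mx conjc (trmx A).

Definition unitary_mx (n : nat) (U : 'M[C]_n) : Prop := U *m adjM U = 1%:M.

Inductive scalar_polyfun (d : nat) : ('rV[C]_d -> C) -> Prop :=
| spf_const (c : C) : scalar_polyfun (fun _ => c)
| spf_coord (j : 'I_d) : scalar_polyfun (fun z => z 0 j)
| spf_add f g : scalar_polyfun f -> scalar_polyfun g ->
    scalar_polyfun (fun z => f z + g z)
| spf_mul f g : scalar_polyfun f -> scalar_polyfun g ->
    scalar_polyfun (fun z => f z * g z).

Definition vec_polyfun (d n : nat) (p : 'rV[C]_d -> 'cV[C]_n) : Prop :=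
  forall i : 'I_n, scalar_polyfun (fun z => p z i 0).

(* ---------- Hilbert spaces of C^n-valued functions on U ----------
   Elements are functions on all of C^d that vanish outside U; a function
   on U is identified with its extension by zero. *)
Definition ext0 (d n : nat) (U : set 'rV[C]_d) (f : 'rV[C]_d -> 'cV[C]_n)
  : 'rV[C]_d -> 'cV[C]_n :=
  fun z => if `[< U z >] then f z else 0.

Section Hilbert.
Variables (d n : nat).
Local Notation Fn := ('rV[C]_d -> 'cV[C]_n).
Variables (U : set 'rV[C]_d) (H : set Fn) (ip : Fn -> Fn -> C).

Definition hnorm (f : Fn) : C := sqrtC (ip f f).

Definition fsub (f g : Fn) : Fn := fun z => f z - g z.

(* H is a Hilbert space (with inner product ip, linear in the first slot)
   of holomorphic C^n-valued functions on U, with reproducing kernel K *)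
Definition is_RKHS (K : 'rV[C]_d -> 'rV[C]_d -> 'M[C]_n) : Prop :=
  [/\
      [/\ H (fun _ => 0),
         (forall f g, H f -> H g -> H (fun z => f z + g z)) &
         (forall (c : C) f, H f -> H (fun z => c *: f z))],
      (forall f, H f -> (forall z, ~ U z -> f z = 0) /\ holomorphic_on U f),
      [/\ forall f g h, H f -> H g -> H h -> ip (fun z => f z + g z) h = ip f h + ip g h,
          forall (c : C) f g, H f -> H g -> ip (fun z => c *: f z) g = c * ip f g,
          forall f g, H f -> H g -> ip g f = conjc (ip f g),
          forall f, H f -> 0 <= ip f f &
          forall f, H f -> ip f f = 0 -> f = (fun _ => 0)],
      (forall u : nat -> Fn, (forall k, H (u k)) ->
         (forall e : C, 0 < e -> exists N, forall k l, (N <= k)%N -> (N <= l)%N ->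
             hnorm (fsub (u k) (u l)) < e) ->
         exists g, H g /\ forall e : C, 0 < e -> exists N, forall k, (N <= k)%N ->
             hnorm (fsub (u k) g) < e) &
      (forall w (v : 'cV[C]_n), U w ->
         H (ext0 U (fun z => K z w *m v)) /\
         forall f, H f -> ip f (ext0 U (fun z => K z w *m v)) = (adjM v *m f w) 0 0)].

Definition poly_dense : Prop :=
  (forall p, vec_polyfun p -> H (ext0 U p)) /\
  forall f, H f -> forall e : C, 0 < e ->
    exists p, vec_polyfun p /\ hnorm (fsub f (ext0 U p)) < e.

Definition Mop (j : 'I_d) (f : Fn) : Fn := fun z => z 0 j *: f z.

Definition M_bounded : Prop :=
  forall j : 'I_d, (forall f, H f -> H (Mop j f)) /\
    exists B : C, forall f, H f -> hnorm (Mop j f) <= B * hnorm f.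

(* (k . M)_j = k_j(M) = \sum_i A i j M_i, where k . z = z *m A *)
Definition kM (A : 'M[C]_d) (j : 'I_d) (f : Fn) : Fn :=
  fun z => \sum_(i < d) A i j *: Mop i f z.

Definition unitary_op (T : Fn -> Fn) : Prop :=
  [/\ forall f, H f -> H (T f),
      forall f g, H f -> H g -> T (fun z => f z + g z) = (fun z => T f z + T g z),
      forall (c : C) f, H f -> T (fun z => c *: f z) = (fun z => c *: T f z),
      forall f g, H f -> H g -> ip (T f) (T g) = ip f g &
      forall g, H g -> exists f, H f /\ T f = g].

Definition K_homogeneous : Prop :=
  forall A, linAut U A ->
    exists (G Gstar : Fn -> Fn),
      unitary_op G /\
      (forall f, H f -> H (Gstar f)) /\
      (forall f g, H f -> H g -> ip (G f) g = ip f (Gstar g)) /\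
      forall (j : 'I_d) f, H f -> G (kM A j (Gstar f)) = Mop j f.

End Hilbert.

Definition quasi_invariant (d n : nat) (U : set 'rV[C]_d)
  (K : 'rV[C]_d -> 'rV[C]_d -> 'M[C]_n) (c : 'M[C]_d -> 'rV[C]_d -> 'M[C]_n) :=
  forall A, linAut U A -> forall z w, U z -> U w ->
    K z w = c A z *m K (z *m invmx A) (w *m invmx A) *m adjM (c A w).

End Defs.

(* Main.v *)
Require Import Defs.
From HB Require Import structures.
From mathcomp Require Import all_boot all_order all_algebra.
From mathcomp Require Import complex.
From mathcomp Require Import all_classical all_reals all_analysis.
From mathcomp Require Import ring lra.
Set Implicit Arguments. Unset Strict Implicit. Unset Printing Implicit Defensive.
Import Order.TTheory GRing.Theory Num.Theory.
Import numFieldNormedType.Exports.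
Local Open Scope ring_scope.
Local Open Scope complex_scope.
Local Open Scope classical_set_scope.
Lemma C_real (R : realType) (x : R[i]) : 0 <= x -> x = (complex.Re x)%:C.
Proof. by case: x => a b; rewrite lecE /= => /andP[/eqP -> _]. Qed.

Lemma conjcRM (R : realType) (t : R) (a : R[i]) : conjc (t%:C * a) = t%:C * conjc a.
Proof. case: a => x y; apply/eqP; rewrite eq_complex /= !mul0r !subr0 !addr0 mulrN !eqxx. done. Qed.

Section Basics.
Variable R : realType.
Local Notation C := R[i].
Variables (d n : nat).
Local Notation Fn := ('rV[C]_d -> 'cV[C]_n).
Variables (Om : set 'rV[C]_d) (H : set Fn) (ip : Fn -> Fn -> C)
  (K : 'rV[C]_d -> 'rV[C]_d -> 'M[C]_n).
Hypothesis hK : is_RKHS Om H ip K.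

Lemma H0 : H (fun _ => 0). Proof. by case: hK => [[h0 hD hZ]] *; auto. Qed.
Lemma HD {f g} : H f -> H g -> H (fun z => f z + g z). Proof. by case: hK => [[h0 hD hZ]] *; auto. Qed.
Lemma HZ (c : C) {f} : H f -> H (fun z => c *: f z). Proof. by case: hK => [[h0 hD hZ]] *; auto. Qed.
Lemma HB {f g} : H f -> H g -> H (fsub f g).
Proof.
move=> hf hg; have -> : fsub f g = (fun z => f z + (-1) *: g z).
  by apply/funext => z; rewrite /fsub scaleN1r.
by apply: HD => //; apply: HZ.
Qed.
Lemma H_out {f} : H f -> forall z, ~ Om z -> f z = 0.
Proof. by case: hK => _ hh _ _ _ hf; case: (hh f hf). Qed.
Lemma ipDl f g h : H f -> H g -> H h -> ip (fun z => f z + g z) h = ip f h + ip g h.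
Proof. by case: hK => _ _ [i1 i2 i3 i4 i5] *; auto. Qed.
Lemma ipZl (c : C) f g : H f -> H g -> ip (fun z => c *: f z) g = c * ip f g.
Proof. by case: hK => _ _ [i1 i2 i3 i4 i5] *; auto. Qed.
Lemma ipC {f g} : H f -> H g -> ip g f = conjc (ip f g).
Proof. by case: hK => _ _ [i1 i2 i3 i4 i5] *; auto. Qed.
Lemma ip_ge0 {f} : H f -> 0 <= ip f f.
Proof. by case: hK => _ _ [i1 i2 i3 i4 i5] *; auto. Qed.
Lemma ip_def {f} : H f -> ip f f = 0 -> f = (fun _ => 0).
Proof. by case: hK => _ _ [i1 i2 i3 i4 i5] *; auto. Qed.

Lemma ipDr f g h : H f -> H g -> H h -> ip h (fun z => f z + g z) = ip h f + ip h g.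
Proof.
move=> hf hg hh; by rewrite (ipC (HD hf hg) hh) ipDl // rmorphD (ipC hf hh) (ipC hg hh).
Qed.
Lemma ipZr (c : C) f g : H f -> H g -> ip g (fun z => c *: f z) = conjc c * ip g f.
Proof.
move=> hf hg; by rewrite (ipC (HZ c hf) hg) ipZl // rmorphM (ipC hf hg).
Qed.
Lemma ip0l {f} : H f -> ip (fun _ => 0) f = 0.
Proof.
move=> hf; have -> : (fun _ : 'rV[C]_d => 0 : 'cV[C]_n) = (fun z => 0 *: (fun _ => 0 : 'cV[C]_n) z).
  by apply/funext => z; rewrite scale0r.
by rewrite ipZl ?mul0r //; exact: H0.
Qed.
Lemma ip0r {f} : H f -> ip f (fun _ => 0) = 0.
Proof. by move=> hf; rewrite ipC ?ip0l ?conjc0 //; exact: H0. Qed.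
Lemma ipBl f g h : H f -> H g -> H h -> ip (fsub f g) h = ip f h - ip g h.
Proof.
move=> hf hg hh; have -> : fsub f g = (fun z => f z + (-1) *: g z).
  by apply/funext => z; rewrite /fsub scaleN1r.
by rewrite ipDl ?ipZl ?mulN1r //; apply: HZ.
Qed.
Lemma ipBr f g h : H f -> H g -> H h -> ip h (fsub f g) = ip h f - ip h g.
Proof.
move=> hf hg hh; by rewrite (ipC (HB hf hg) hh) ipBl // rmorphB (ipC hf hh) (ipC hg hh).
Qed.

Definition Nn f : R := complex.Re (ip f f).
Local Notation N := Nn.
Lemma ipNE {f} : H f -> ip f f = (N f)%:C.
Proof. by move=> hf; apply: C_real; apply: ip_ge0. Qed.
Lemma N_ge0 {f} : H f -> 0 <= N f.
Proof. by move=> hf; rewrite -lecR -ipNE //; apply: ip_ge0. Qed.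
Lemma N0 {f} : H f -> N f = 0 -> f = (fun _ => 0).
Proof. by move=> hf h0; apply: ip_def => //; rewrite ipNE // h0. Qed.

Definition sq (a : C) : R := complex.Re (a * conjc a).
Lemma sqE a : a * conjc a = (sq a)%:C.
Proof. apply: C_real; exact: mulcJ_ge0. Qed.
Lemma sq_ge0 a : 0 <= sq a.
Proof. by rewrite -lecR -sqE mulcJ_ge0. Qed.

Lemma CS f g : H f -> H g -> sq (ip f g) <= N f * N g.
Proof.
move=> hf hg.
have [Ng0|Ngp] := eqVneq (N g) 0.
  rewrite Ng0 mulr0 (N0 hg Ng0) ip0r // /sq mul0r; exact: lexx.
have Ngp' : 0 < N g by rewrite lt0r Ngp N_ge0.
set a := ip f g; set t := (N g)^-1.
set h := fsub f (fun z => (t%:C * a) *: g z).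
have hh : H h by apply: HB => //; apply: HZ.
have := ip_ge0 hh.
rewrite /h ipBl ?ipBr ?ipZl ?ipZr //; try by apply: HZ.
rewrite (ipC hf hg) -/a !ipNE // conjcRM.
have -> : (N f)%:C - (t%:C * conjc a * a) - (t%:C * a * conjc a - t%:C * a * (t%:C * conjc a * (N g)%:C))
   = (N f)%:C - 2%:R * t%:C * (a * conjc a) + t%:C * t%:C * (N g)%:C * (a * conjc a) by ring.
rewrite sqE.
have -> : (N f)%:C - 2%:R * t%:C * (sq a)%:C + t%:C * t%:C * (N g)%:C * (sq a)%:C
  = (N f - 2%:R * t * sq a + t * t * N g * sq a)%:C.
  by rewrite rmorphD rmorphB !rmorphM rmorph_nat.
rewrite lecR.
have -> : t * t * N g = t by rewrite /t -mulrA mulVf ?mulr1.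
move=> hle.
have : sq a * t <= N f by nra.
by rewrite ler_pdivrMr.
Qed.
End Basics.
Lemma ReD (R : realType) (x y : R[i]) : complex.Re (x + y) = complex.Re x + complex.Re y.
Proof. by case: x; case: y. Qed.
Lemma ReJ (R : realType) (x : R[i]) : complex.Re (conjc x) = complex.Re x.
Proof. by case: x. Qed.
Lemma Re_sq (R : realType) (x : R[i]) : complex.Re x ^+ 2 <= sq x.
Proof. case: x => a b; rewrite /sq /=; nra. Qed.
Lemma sq_real (R : realType) (x : R) : sq x%:C = x ^+ 2.
Proof. rewrite /sq /=; ring. Qed.
Lemma sq0 (R : realType) (x : R[i]) : sq x = 0 -> x = 0.
Proof.
case: x => a b; rewrite /sq /= => h.
have ha : a = 0 by nra. have hb : b = 0 by nra. by rewrite ha hb.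
Qed.

Section Hilb.
Variable R : realType.
Local Notation C := R[i].
Variables (d n : nat).
Local Notation Fn := ('rV[C]_d -> 'cV[C]_n).
Variables (Om : set 'rV[C]_d) (H : set Fn) (ip : Fn -> Fn -> C)
  (K : 'rV[C]_d -> 'rV[C]_d -> 'M[C]_n).
Hypothesis hK : is_RKHS Om H ip K.
Local Notation N := (Nn ip).
Local Notation HD := (HD hK).
Local Notation HZ := (HZ hK).
Local Notation HB := (HB hK).
Local Notation ipDl := (ipDl hK).
Local Notation ipDr := (ipDr hK).
Local Notation ipZl := (ipZl hK).
Local Notation ipZr := (ipZr hK).
Local Notation ipBl := (ipBl hK).
Local Notation ipBr := (ipBr hK).
Local Notation ipC := (ipC hK).
Local Notation ip0l := (ip0l hK).
Local Notation ip0r := (ip0r hK).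
Local Notation ipNE := (ipNE hK).
Local Notation N_ge0 := (N_ge0 hK).
Local Notation N0 := (N0 hK).
Local Notation ip_ge0 := (ip_ge0 hK).
Local Notation ip_def := (ip_def hK).
Local Notation H_out := (H_out hK).
Local Notation H0 := (H0 hK).
Local Notation CS := (CS hK).

Lemma NDE x y : H x -> H y ->
  N (fun z => x z + y z) = N x + N y + 2%:R * (complex.Re (ip x y) : R).
Proof.
move=> hx hy; have hxy := HD hx hy; rewrite /Nn ipDl // !ipDr //.
rewrite (ipC hx hy) !ReD ReJ; ring.
Qed.
Lemma NBE x y : H x -> H y ->
  N (fsub x y) = N x + N y - 2%:R * (complex.Re (ip x y) : R).
Proof.
move=> hx hy; have hxy := HB hx hy; rewrite /Nn ipBl // !ipBr //.
have E : forall a b : C, complex.Re (a - b) = complex.Re a - complex.Re b.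
  by move=> [??] [??].
rewrite !E (ipC hx hy) ReJ; ring.
Qed.

Lemma two_re_le x y (eta : R) : H x -> H y -> 0 < eta ->
  2%:R * (complex.Re (ip x y) : R) <= eta * N x + eta^-1 * N y.
Proof.
move=> hx hy he.
have h1 := CS hx hy. have h2 := Re_sq (ip x y).
have nx := N_ge0 hx. have ny := N_ge0 hy.
set r := complex.Re (ip x y) in h2 *.
set a := eta * N x; set b := eta^-1 * N y.
have ha : 0 <= a by rewrite /a mulr_ge0 // ltW.
have hb : 0 <= b by rewrite /b mulr_ge0 // invr_ge0 ltW.
have hab : a * b = N x * N y.
  by rewrite /a /b mulrACA mulfV ?gt_eqF // mul1r.
have hr : r ^+ 2 <= a * b by rewrite hab; apply: le_trans h2 h1.
have h3 : 4%:R * r ^+ 2 <= (a + b) ^+ 2.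
  have := sqr_ge0 (a - b); nra.
rewrite leNgt; apply/negP => hlt.
have : 0 < (2%:R * r - (a + b)) * (2%:R * r + (a + b)) by apply: mulr_gt0; lra.
nra.
Qed.

Lemma Ntri x y (eta : R) : H x -> H y -> 0 < eta ->
  N (fun z => x z + y z) <= (1 + eta) * N x + (1 + eta^-1) * N y.
Proof.
move=> hx hy he; rewrite NDE //; have := two_re_le hx hy he; lra.
Qed.

Lemma Nsub_tri f g h (eta : R) : H f -> H g -> H h -> 0 < eta ->
  N (fsub f h) <= (1 + eta) * N (fsub f g) + (1 + eta^-1) * N (fsub g h).
Proof.
move=> hf hg hh he.
have -> : fsub f h = (fun z => fsub f g z + fsub g h z).
  by apply/funext => z; rewrite /fsub addrA subrK.
by apply: Ntri => //; apply: HB.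
Qed.

Lemma Nsym f g : H f -> H g -> N (fsub f g) = N (fsub g f).
Proof.
move=> hf hg; rewrite !NBE // (ipC hf hg) ReJ; ring.
Qed.

Lemma hnorm_lt x (e : C) : H x -> 0 < e ->
  (hnorm ip x < e) = (N x < complex.Re e ^+ 2).
Proof.
move=> hx he.
have e0 : 0 <= e by apply: ltW.
have hn : 0 <= hnorm ip x by rewrite /hnorm sqrtC_ge0 ip_ge0.
rewrite -(ltr_pXn2r (n:=2)) ?nnegrE //.
rewrite /hnorm sqrtCK ipNE // {1}(C_real e0) -rmorphXn ltcR //.
Qed.

Definition tends0 (u : nat -> R) := forall e : R, 0 < e -> exists N0, forall k, (N0 <= k)%N -> u k < e.

Lemma completeN (u : nat -> Fn) : (forall k, H (u k)) ->
  (forall e : R, 0 < e -> exists N0, forall k l, (N0 <= k)%N -> (N0 <= l)%N -> N (fsub (u k) (u l)) < e) ->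
  exists g, H g /\ tends0 (fun k => N (fsub (u k) g)).
Proof.
move=> hu hc.
case: hK => _ _ _ hcomp _.
have [g [hg hlim]] : exists g, H g /\ forall e : C, 0 < e -> exists N0, forall k, (N0 <= k)%N ->
             hnorm ip (fsub (u k) g) < e.
  apply: hcomp => // e he.
  have [N0 hN] := hc (complex.Re e ^+ 2) (ltac:(rewrite exprn_gt0 //; move: he; rewrite ltcE => /andP[]//)).
  by exists N0 => k l hk hl; rewrite hnorm_lt ?hN //; apply: HB.
exists g; split => // e he.
have hs : 0 < (Num.sqrt e)%:C by rewrite ltcR sqrtr_gt0.
have [N0 hN] := hlim _ hs.
exists N0 => k hk; have := hN k hk; rewrite hnorm_lt //; last by apply: HB.
by rewrite /= sqr_sqrtr // ltW.
Qed.
End Hilb.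
Definition ik (R : realType) (k : nat) : R := (k.+1%:R)^-1.

Lemma arch (R : realType) (e : R) : 0 < e -> exists N0, forall k, (N0 <= k)%N -> ik R k < e.
Proof.
rewrite /ik; move=> he; exists (Num.Def.trunc e^-1) => k hk.
rewrite invf_plt ?posrE // ?ltr0n //.
apply: lt_le_trans (truncnS_gt _) _; rewrite ler_nat ltnS //.
Qed.

Lemma inv_mono (R : realType) (k l : nat) : (k <= l)%N -> ik R l <= ik R k.
Proof. rewrite /ik; by move=> h; rewrite lef_pV2 ?posrE ?ltr0n // ler_nat ltnS. Qed.

Lemma inv_pos (R : realType) (k : nat) : 0 < ik R k.
Proof. rewrite /ik; by rewrite invr_gt0 ltr0n. Qed.

Section Hilb2.
Variable R : realType.
Local Notation C := R[i].
Variables (d n : nat).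
Local Notation Fn := ('rV[C]_d -> 'cV[C]_n).
Variables (Om : set 'rV[C]_d) (H : set Fn) (ip : Fn -> Fn -> C)
  (K : 'rV[C]_d -> 'rV[C]_d -> 'M[C]_n).
Hypothesis hK : is_RKHS Om H ip K.
Local Notation N := (Nn ip).
Local Notation HD := (HD hK).
Local Notation HZ := (HZ hK).
Local Notation HB := (HB hK).
Local Notation ipDl := (ipDl hK).
Local Notation ipDr := (ipDr hK).
Local Notation ipZl := (ipZl hK).
Local Notation ipZr := (ipZr hK).
Local Notation ipBl := (ipBl hK).
Local Notation ipBr := (ipBr hK).
Local Notation ipC := (ipC hK).
Local Notation ip0l := (ip0l hK).
Local Notation ip0r := (ip0r hK).
Local Notation ipNE := (ipNE hK).
Local Notation N_ge0 := (N_ge0 hK).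
Local Notation N0 := (N0 hK).
Local Notation ip_ge0 := (ip_ge0 hK).
Local Notation ip_def := (ip_def hK).
Local Notation H_out := (H_out hK).
Local Notation H0 := (H0 hK).
Local Notation CS := (CS hK).
Local Notation NDE := (NDE hK).
Local Notation NBE := (NBE hK).
Local Notation Nsub_tri := (Nsub_tri hK).
Local Notation Nsym := (Nsym hK).
Local Notation completeN := (completeN hK).

Lemma NZ (c : C) x : H x -> N (fun z => c *: x z) = sq c * N x.
Proof.
move=> hx; rewrite /Nn ipZl ?ipZr //; last exact: HZ.
by rewrite mulrA sqE ipNE // -rmorphM.
Qed.

Lemma ortho_dense (D : set Fn) : (forall p, D p -> H p) ->
  (forall f, H f -> forall e : R, 0 < e -> exists p, D p /\ N (fsub f p) < e) ->
  forall h, H h -> (forall p, D p -> ip p h = 0) -> h = (fun _ => 0).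
Proof.
move=> hDH hdense h hh hort.
have [Nh0|] := eqVneq (N h) 0; first exact: N0.
move=> Nhn; have Nhp : 0 < N h by rewrite lt0r Nhn N_ge0.
have [p [Dp hp]] := hdense h hh (N h / 2%:R) (ltac:(by rewrite divr_gt0)).
have hpH := hDH p Dp.
have := CS (HB hh hpH) hh.
rewrite ipBl // (hort p Dp) subr0 ipNE // sq_real.
move=> hle; set a := N h in hle Nhp hp *; set b := N (fsub h p) in hle hp *.
exfalso; nra.
Qed.

Lemma le_eps (a b : R) : (forall e, 0 < e -> a <= b + e) -> a <= b.
Proof. by move=> h; apply/ler_addgt0Pr. Qed.

Lemma Nsub_lim (f g : Fn) (s : nat -> Fn) (Y : R) : H f -> H g -> (forall k, H (s k)) ->
  tends0 (fun k => N (fsub (s k) g)) ->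
  (forall k, Y <= N (fsub f (s k))) -> Y <= N (fsub f g).
Proof.
move=> hf hg hs hlim hY.
apply: le_eps => e he.
set Z := N (fsub f g).
have hZ : 0 <= Z by apply: N_ge0; apply: HB.
pose t := Num.min 1 (e / (Z + 2%:R)).
have ht : 0 < t by rewrite lt_min ltr01 divr_gt0 //; lra.
have ht1 : t <= 1 by rewrite ge_min lexx.
have hte : t * (Z + 2%:R) <= e.
  by rewrite -ler_pdivlMr ?ge_min ?lexx ?orbT //; lra.
have [N0' hN] := hlim (t ^+ 2) (ltac:(by rewrite exprn_gt0)).
have := Nsub_tri hf hg (hs N0') ht.
rewrite (Nsym hg (hs N0')).
have := hN N0' (leqnn _).
have := hY N0'.
set W := N (fsub (s N0') g).
have hW : 0 <= W by apply: N_ge0; apply: HB.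
move=> h1 h2 h3.
have hti : 0 < t^-1 by rewrite invr_gt0.
have h4 : (1 + t^-1) * W <= (1 + t^-1) * t ^+ 2.
  by rewrite ler_pM2l ?ltW //; lra.
have h5 : (1 + t^-1) * t ^+ 2 = t ^+ 2 + t by rewrite mulrDl mul1r expr2 mulKf ?gt_eqF.
rewrite -/Z in h3.
have h6 : Y <= Z + t * Z + t ^+ 2 + t by lra.
have : t * Z + t ^+ 2 + t <= t * (Z + 2%:R) by nra.
lra.
Qed.

Definition subspace (S : set Fn) :=
  [/\ S (fun _ => 0), (forall x y, S x -> S y -> S (fun z => x z + y z)),
      (forall (c : C) x, S x -> S (fun z => c *: x z)) & (forall x, S x -> H x)].

Lemma sq2 : sq (2%:R : C) = 2%:R ^+ 2.
Proof. rewrite /sq -(rmorph_nat (real_complex R)) conjc_real -rmorphM /=. by rewrite expr2. Qed.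

Lemma sqRM (t : R) (b : C) : sq (t%:C * b) = t ^+ 2 * sq b.
Proof. case: b => x y; rewrite /sq /=; ring. Qed.

Lemma proj_dense (S : set Fn) : subspace S ->
  (forall y, H y -> (forall s, S s -> ip s y = 0) -> y = (fun _ => 0)) ->
  forall f, H f -> forall e : R, 0 < e -> exists s, S s /\ N (fsub f s) < e.
Proof.
move=> [S0 SD SZ SH] hort f hf.
pose E := [set r | exists s, S s /\ r = N (fsub f s)].
have hlb : has_lbound E.
  by exists 0 => r [s [hs ->]]; apply: N_ge0; apply: HB => //; apply: SH.
have hE : has_inf E.
  by split => //; exists (N (fsub f (fun _ => 0))); exists (fun _ => 0).
pose del := inf E.
have lb : forall s, S s -> del <= N (fsub f s).
  by move=> s hs; apply: ge_inf => //; exists s.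
have del0 : 0 <= del.
  apply: lb_le_inf => //; first by case: hE.
  by move=> r [s [hs ->]]; apply: N_ge0; apply: HB => //; apply: SH.
have adh : forall k : nat, exists s, S s /\ N (fsub f s) < del + ik R k.
  move=> k; have [r [s [hs ->]] hr] := inf_adherent (inv_pos R k) hE.
  by exists s.
have [s hs] := choice adh.
have sS k : S (s k) by case: (hs k).
have sH k : H (s k) by apply: SH.
have sE k : N (fsub f (s k)) < del + ik R k by case: (hs k).
have cau : forall k l, N (fsub (s k) (s l)) <= 2%:R * ik R k + 2%:R * ik R l.
  move=> k l.
  set x := fsub f (s l); set y := fsub f (s k).
  have hx : H x by apply: HB.
  have hy : H y by apply: HB.
  have e1 : fsub x y = fsub (s k) (s l).
    by apply/funext => z; rewrite /x /y /fsub opprB addrC addrA subrK.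
  pose m := fun z => 2%:R^-1 *: (s k z + s l z).
  have hm : S m by apply: SZ; apply: SD.
  have e2 : (fun z => x z + y z) = (fun z => 2%:R *: fsub f m z).
    apply/funext => z; rewrite /x /y /m /fsub scalerBr scalerA mulfV ?pnatr_eq0 // scale1r.
    by rewrite scaler_nat mulr2n addrACA opprD; congr (_ + _); rewrite addrC.
  have p1 := NDE hx hy; have p2 := NBE hx hy.
  rewrite e2 NZ in p1; last by apply: HB => //; apply: SH.
  rewrite e1 in p2.
  have := lb m hm; have := sE k; have := sE l.
  rewrite sq2 in p1; rewrite /x /y in p1 p2 => h1 h2 h3.
  have h4 : 2%:R ^+ 2 * del <= 2%:R ^+ 2 * N (fsub f m) by rewrite ler_pM2l.
  move: h4 p1; rewrite expr2 => h4 p1.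
  move: (ik R k) (ik R l) (N (fsub (s k) (s l))) (N (fsub f (s l))) (N (fsub f (s k))) (N (fsub f m)) (complex.Re (ip (fsub f (s l)) (fsub f (s k)))) p1 p2 h1 h2 h3 h4.
  clear. move=> a b c x1 x2 x3 x4. clearbody del. move: del => del. clear. move=> P1 P2 P3 P4 P5 P6.
  have T1 : c = 2%:R * x1 + 2%:R * x2 - 2%:R * 2%:R * x3 by lra.
  have T2 : x1 <= del + b by lra.
  have T3 : x2 <= del + a by lra.
  have T4 : del <= x3 by lra.
  lra.
have [g [hg hlim]] : exists g, H g /\ tends0 (fun k => N (fsub (s k) g)).
  apply: completeN => // e he.
  have [N1 hN1] := arch (ltac:(by rewrite divr_gt0 // ltr0n) : 0 < e / 4%:R).
  exists N1 => k l hk hl.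
  apply: le_lt_trans (cau k l) _.
  have := hN1 k hk; have := hN1 l hl; move=> q1 q2. lra.
set y := fsub f g.
have hy : H y by apply: HB.
have low : forall w, S w -> del <= N (fsub f (fun z => g z + w z)).
  move=> w hw.
  apply: (Nsub_lim (s := fun k z => s k z + w z)) => //.
  - by apply: HD => //; apply: SH.
  - by move=> k; apply: HD => //; apply: SH.
  - move=> e he; have [N1 hN1] := hlim e he; exists N1 => k hk.
    have -> : fsub (fun z => s k z + w z) (fun z => g z + w z) = fsub (s k) g.
      by apply/funext => z; rewrite /fsub opprD addrACA subrr addr0.
    exact: hN1.
  - by move=> k; apply: lb; apply: SD.
have up : N y <= del.
  apply: le_eps => e he.
  pose t := Num.min 1 (e / (del + 4%:R)).
  have ht : 0 < t by rewrite lt_min ltr01 divr_gt0 //; lra.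
  have ht1 : t <= 1 by rewrite ge_min lexx.
  have hte : t * (del + 4%:R) <= e.
    by rewrite -ler_pdivlMr ?ge_min ?lexx ?orbT //; lra.
  have [N1 hN1] := hlim (t ^+ 2) (ltac:(by rewrite exprn_gt0)).
  have [N2 hN2] := arch ht.
  set k := maxn N1 N2.
  have hk1 := hN1 k (leq_maxl _ _).
  have hk2 := hN2 k (leq_maxr _ _).
  have := Nsub_tri hf (sH k) hg ht.
  have := sE k.
  set W := N (fsub (s k) g).
  set V := N (fsub f (s k)).
  have hW : 0 <= W by apply: N_ge0; apply: HB.
  have hti : 0 < t^-1 by rewrite invr_gt0.
  move=> h1 h2.
  have h4 : (1 + t^-1) * W <= (1 + t^-1) * t ^+ 2.
    by rewrite ler_pM2l ?ltW //; lra.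
  have h5 : (1 + t^-1) * t ^+ 2 = t ^+ 2 + t by rewrite mulrDl mul1r expr2 mulKf ?gt_eqF.
  have h6 : (1 + t) * V <= (1 + t) * (del + t).
    by rewrite ler_pM2l; [lra | lra].
  have : N y <= (1 + t) * (del + t) + t ^+ 2 + t by rewrite /y; lra.
  have : (1 + t) * (del + t) + t ^+ 2 + t <= del + t * (del + 4%:R) by nra.
  lra.
have orth : forall w, S w -> ip y w = 0.
  move=> w hw; have hwH := SH w hw.
  set b := ip y w.
  set t := (N w + 1)^-1.
  have Nw0 := N_ge0 hwH.
  have ht : 0 < t by rewrite invr_gt0; lra.
  have htw : t * N w < 1.
    by rewrite /t mulrC ltr_pdivrMr; lra.
  have := low _ (SZ (t%:C * b) w hw).
  have -> : fsub f (fun z => g z + (t%:C * b) *: w z) = fsub y (fun z => (t%:C * b) *: w z).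
    by apply/funext => z; rewrite /y /fsub opprD addrA.
  rewrite NBE //; last by apply: HZ.
  rewrite NZ // ipZr // -/b conjcRM sqRM.
  have -> : complex.Re (t%:C * conjc b * b) = t * sq b.
    by rewrite /sq mulrC mulrA mulrC; case: b => ??; rewrite /= ; ring.
  have q0 := sq_ge0 b.
  move=> h.
  have : t * sq b <= 0.
    have : 2%:R * (t * sq b) <= t ^+ 2 * sq b * N w by lra.
    nra.
  move=> h2; apply: sq0; apply/eqP; rewrite eq_le q0 andbT.
  by rewrite -(pmulr_rle0 _ ht).
have y0 : y = (fun _ => 0).
  apply: hort => // w hw; rewrite (ipC hy (SH w hw)) orth // conjc0 //.
have fg : f = g.
  apply/funext => z; apply: subr0_eq; have := congr1 (fun F => F z) y0; exact.
move=> e he; have [N1 hN1] := hlim e he; exists (s N1); split => //.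
by rewrite fg Nsym //; apply: hN1.
Qed.

End Hilb2.
Section Mx.
Variable R : realType.
Local Notation C := R[i].

Lemma adjME p q (A : 'M[C]_(p, q)) i j : adjM A i j = conjc (A j i).
Proof. by rewrite /adjM !mxE. Qed.

Lemma adjM_mul p q r (A : 'M[C]_(p, q)) (B : 'M[C]_(q, r)) : adjM (A *m B) = adjM B *m adjM A.
Proof.
apply/matrixP => i j; rewrite adjME !mxE rmorph_sum; apply: eq_bigr => k _.
by rewrite !adjME rmorphM mulrC.
Qed.

Lemma adjMK p q (A : 'M[C]_(p, q)) : adjM (adjM A) = A.
Proof. by apply/matrixP => i j; rewrite !adjME conjcK. Qed.

Lemma adjMD p q (A B : 'M[C]_(p, q)) : adjM (A + B) = adjM A + adjM B.
Proof. by apply/matrixP => i j; rewrite [LHS]adjME [RHS]mxE !adjME mxE rmorphD. Qed.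

Lemma adjMZ p q (c : C) (A : 'M[C]_(p, q)) : adjM (c *: A) = conjc c *: adjM A.
Proof. by apply/matrixP => i j; rewrite [LHS]adjME [RHS]mxE !adjME mxE rmorphM. Qed.

Lemma adjM1 m : adjM (1%:M : 'M[C]_m) = 1%:M.
Proof. by apply/matrixP => i j; rewrite adjME !mxE eq_sym; case: (i == j); rewrite ?conjc1 ?conjc0. Qed.

Lemma adjM11 (M : 'M[C]_1) : (adjM M) 0 0 = conjc (M 0 0).
Proof. by rewrite adjME. Qed.

Lemma form_conj n (a b : 'cV[C]_n) (B : 'M[C]_n) :
  conjc ((adjM a *m B *m b) 0 0) = (adjM b *m adjM B *m a) 0 0.
Proof. by rewrite -adjM11 !adjM_mul adjMK mulmxA. Qed.

Lemma vform_conj n (a b : 'cV[C]_n) :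
  conjc ((adjM a *m b) 0 0) = (adjM b *m a) 0 0.
Proof. by rewrite -adjM11 !adjM_mul adjMK. Qed.

Lemma adj_delta n (i : 'I_n) : adjM (delta_mx i 0 : 'cV[C]_n) = delta_mx 0 i.
Proof.
apply/matrixP => a b; rewrite adjME !mxE andbC.
by rewrite conjc_nat.
Qed.

Lemma e_form n (B : 'M[C]_n) i j : (adjM (delta_mx i 0 : 'cV[C]_n) *m B *m (delta_mx j 0 : 'cV[C]_n)) 0 0 = B i j.
Proof. by rewrite adj_delta -rowE -colE !mxE. Qed.

Lemma e_vec n (x : 'cV[C]_n) i : (adjM (delta_mx i 0 : 'cV[C]_n) *m x) 0 0 = x i 0.
Proof. by rewrite adj_delta -rowE !mxE. Qed.

Lemma mx_forms_eq n (A B : 'M[C]_n) :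
  (forall v v' : 'cV[C]_n, (adjM v' *m A *m v) 0 0 = (adjM v' *m B *m v) 0 0) -> A = B.
Proof. by move=> h; apply/matrixP => i j; rewrite -e_form h e_form. Qed.

Lemma vec_forms_eq n (x y : 'cV[C]_n) :
  (forall v' : 'cV[C]_n, (adjM v' *m x) 0 0 = (adjM v' *m y) 0 0) -> x = y.
Proof. by move=> h; apply/matrixP => i j; rewrite (ord1 j) -e_vec h e_vec. Qed.

Lemma form_scale n (u w : 'cV[C]_n) (c : C) : (adjM u *m (c *: w)) 0 0 = c * (adjM u *m w) 0 0.
Proof. by rewrite -scalemxAr mxE. Qed.

Lemma unitary_adj n (U : 'M[C]_n) : U *m adjM U = 1%:M -> adjM U *m U = 1%:M.
Proof. exact: mulmx1C. Qed.
End Mx.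
Section Poly.
Variable R : realType.
Local Notation C := R[i].
Variable d : nat.

Inductive mp : ('rV[C]_d -> C) -> Prop :=
| mpc (c : C) : mp (fun _ => c)
| mpD f g : mp f -> mp g -> mp (fun z => f z + g z)
| mpX (j : 'I_d) f : mp f -> mp (fun z => z 0 j * f z).

Lemma mp_ext f g : (forall z, f z = g z) -> mp f -> mp g.
Proof. by move=> h; have -> : g = f by apply/funext => z; rewrite h. Qed.

Lemma mp_scal (c : C) f : mp f -> mp (fun z => c * f z).
Proof.
elim => [c'|f1 f2 _ h1 _ h2|j f1 _ h1].
- exact: mpc.
- by apply: mp_ext (mpD h1 h2) => z; rewrite mulrDr.
- by apply: mp_ext (mpX j h1) => z; rewrite mulrCA.
Qed.

Lemma mp_mul f g : mp f -> mp g -> mp (fun z => f z * g z).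
Proof.
move=> hf hg; elim: hf => [c|f1 f2 _ h1 _ h2|j f1 _ h1].
- exact: mp_scal.
- by apply: mp_ext (mpD h1 h2) => z; rewrite mulrDl.
- by apply: mp_ext (mpX j h1) => z; rewrite mulrA.
Qed.

Lemma spf_mp f : scalar_polyfun f -> mp f.
Proof.
elim => [c|j|f1 f2 _ h1 _ h2|f1 f2 _ h1 _ h2].
- exact: mpc.
- by apply: mp_ext (mpX j (mpc 1)) => z; rewrite mulr1.
- exact: mpD.
- exact: mp_mul.
Qed.

Lemma mp_spf f : mp f -> scalar_polyfun f.
Proof.
elim => [c|f1 f2 _ h1 _ h2|j f1 _ h1].
- exact: spf_const.
- exact: spf_add.
- by apply: spf_mul => //; apply: spf_coord.
Qed.
End Poly.
Lemma ext0_in (R : realType) d n (U : set 'rV[R[i]]_d) (f : 'rV[R[i]]_d -> 'cV[R[i]]_n) z :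
  U z -> ext0 U f z = f z.
Proof. by move=> h; rewrite /ext0 asboolT. Qed.
Lemma ext0_out (R : realType) d n (U : set 'rV[R[i]]_d) (f : 'rV[R[i]]_d -> 'cV[R[i]]_n) z :
  ~ U z -> ext0 U f z = 0.
Proof. by move=> h; rewrite /ext0 asboolF. Qed.

Section Ker.
Variable R : realType.
Local Notation C := R[i].
Variables (d n : nat).
Local Notation Fn := ('rV[C]_d -> 'cV[C]_n).
Variables (Om : set 'rV[C]_d) (H : set Fn) (ip : Fn -> Fn -> C)
  (K : 'rV[C]_d -> 'rV[C]_d -> 'M[C]_n).
Hypothesis hK : is_RKHS Om H ip K.
Local Notation N := (Nn ip).
Local Notation HD := (HD hK).
Local Notation HZ := (HZ hK).
Local Notation HB := (HB hK).
Local Notation ipDl := (ipDl hK).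
Local Notation ipDr := (ipDr hK).
Local Notation ipZl := (ipZl hK).
Local Notation ipZr := (ipZr hK).
Local Notation ipBl := (ipBl hK).
Local Notation ipBr := (ipBr hK).
Local Notation ipC := (ipC hK).
Local Notation ip0l := (ip0l hK).
Local Notation ip0r := (ip0r hK).
Local Notation ipNE := (ipNE hK).
Local Notation N_ge0 := (N_ge0 hK).
Local Notation N0 := (N0 hK).
Local Notation ip_ge0 := (ip_ge0 hK).
Local Notation ip_def := (ip_def hK).
Local Notation H_out := (H_out hK).
Local Notation H0 := (H0 hK).
Local Notation CS := (CS hK).
Local Notation NDE := (NDE hK).
Local Notation NBE := (NBE hK).
Local Notation Nsub_tri := (Nsub_tri hK).
Local Notation Nsym := (Nsym hK).
Local Notation completeN := (completeN hK).
Local Notation NZ := (NZ hK).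
Local Notation ortho_dense := (ortho_dense hK).
Local Notation proj_dense := (proj_dense hK).
Local Notation Nsub_lim := (Nsub_lim hK).
Local Notation hnorm_lt := (hnorm_lt hK).

Definition kf (w : 'rV[C]_d) (v : 'cV[C]_n) : Fn := ext0 Om (fun z => K z w *m v).

Lemma kfH w v : Om w -> H (kf w v).
Proof. by case: hK => _ _ _ _ hrep hw; case: (hrep w v hw). Qed.

Lemma rep w v f : Om w -> H f -> ip f (kf w v) = (adjM v *m f w) 0 0.
Proof. by case: hK => _ _ _ _ hrep hw hf; case: (hrep w v hw) => _ ->. Qed.

Lemma kf_in w v z : Om z -> kf w v z = K z w *m v.
Proof. exact: ext0_in. Qed.

Lemma ip_kk w v w' v' : Om w -> Om w' ->
  ip (kf w v) (kf w' v') = (adjM v' *m K w' w *m v) 0 0.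
Proof. move=> hw hw'; rewrite rep //; last exact: kfH. by rewrite (kf_in _ _ hw') mulmxA. Qed.

Lemma K_herm z w : Om z -> Om w -> K z w = adjM (K w z).
Proof.
move=> hz hw; apply: mx_forms_eq => v v'.
rewrite -ip_kk // (ipC (kfH v' hz) (kfH v hw)) ip_kk // form_conj //.
Qed.

Lemma ip_conj f g : H f -> H g -> ip f g = conjc (ip g f).
Proof. by move=> hf hg; rewrite (ipC hg hf). Qed.

Lemma fun_eq_forms (f g : Fn) : H f -> H g ->
  (forall w v, Om w -> ip f (kf w v) = ip g (kf w v)) -> f = g.
Proof.
move=> hf hg h; apply/funext => z.
have [hz|hz] := pselect (Om z); last by rewrite !H_out.
by apply: vec_forms_eq => v; rewrite -!rep // h.
Qed.
End Ker.
Lemma col_sum_delta (R : realType) n (x : 'cV[R[i]]_n) : x = \sum_(i < n) x i 0 *: delta_mx i 0.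
Proof. rewrite {1}(matrix_sum_delta x); apply: eq_bigr => i _; by rewrite big_ord1. Qed.

Lemma mp_vec (R : realType) d n (f : 'rV[R[i]]_d -> R[i]) (v : 'cV[R[i]]_n) :
  mp f -> vec_polyfun (fun z => f z *: v).
Proof.
move=> hf i.
have -> : (fun z => (f z *: v) i 0) = (fun z => f z * v i 0) by apply/funext => z; rewrite mxE.
by apply: spf_mul; [apply: mp_spf | apply: spf_const].
Qed.

Section Char.
Variable R : realType.
Local Notation C := R[i].
Variables (d n : nat).
Local Notation Fn := ('rV[C]_d -> 'cV[C]_n).
Variables (Om : set 'rV[C]_d) (H : set Fn) (ip : Fn -> Fn -> C)
  (K : 'rV[C]_d -> 'rV[C]_d -> 'M[C]_n).
Hypothesis hK : is_RKHS Om H ip K.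
Local Notation N := (Nn ip).
Local Notation HD := (HD hK).
Local Notation HZ := (HZ hK).
Local Notation HB := (HB hK).
Local Notation ipDl := (ipDl hK).
Local Notation ipDr := (ipDr hK).
Local Notation ipZl := (ipZl hK).
Local Notation ipZr := (ipZr hK).
Local Notation ipBl := (ipBl hK).
Local Notation ipBr := (ipBr hK).
Local Notation ipC := (ipC hK).
Local Notation ip0l := (ip0l hK).
Local Notation ip0r := (ip0r hK).
Local Notation ipNE := (ipNE hK).
Local Notation N_ge0 := (N_ge0 hK).
Local Notation N0 := (N0 hK).
Local Notation ip_ge0 := (ip_ge0 hK).
Local Notation ip_def := (ip_def hK).
Local Notation H_out := (H_out hK).
Local Notation H0 := (H0 hK).
Local Notation CS := (CS hK).
Local Notation NDE := (NDE hK).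
Local Notation NBE := (NBE hK).
Local Notation Nsub_tri := (Nsub_tri hK).
Local Notation Nsym := (Nsym hK).
Local Notation completeN := (completeN hK).
Local Notation NZ := (NZ hK).
Local Notation ortho_dense := (ortho_dense hK).
Local Notation proj_dense := (proj_dense hK).
Local Notation Nsub_lim := (Nsub_lim hK).
Local Notation hnorm_lt := (hnorm_lt hK).
Local Notation kf := (kf Om K).
Local Notation kf_in := (kf_in K).
Local Notation kfH := (kfH hK).
Local Notation rep := (rep hK).
Local Notation ip_kk := (ip_kk hK).
Local Notation K_herm := (K_herm hK).
Local Notation ip_conj := (ip_conj hK).
Local Notation fun_eq_forms := (fun_eq_forms hK).

Hypothesis hP : poly_dense Om H ip.
Hypothesis Om0 : Om 0.
Hypothesis hn : forall z, Om z -> K z 0 = 1%:M.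

Lemma polyH q : vec_polyfun q -> H (ext0 Om q).
Proof. by case: hP => h _; apply: h. Qed.

Lemma poly_denseN f : H f -> forall e : R, 0 < e ->
  exists p, (exists q, vec_polyfun q /\ p = ext0 Om q) /\ N (fsub f p) < e.
Proof.
move=> hf e he; case: hP => _ hd.
have hs : 0 < (Num.sqrt e)%:C by rewrite ltcR sqrtr_gt0.
have [q [hq hlt]] := hd f hf _ hs.
exists (ext0 Om q); split; first by exists q.
move: hlt; rewrite hnorm_lt //; last by apply: HB => //; apply: polyH.
by rewrite /= sqr_sqrtr // ltW.
Qed.

Lemma kf0 v : kf 0 v = ext0 Om (fun _ => v).
Proof.
apply/funext => z; have [hz|hz] := pselect (Om z).
  by rewrite kf_in // hn // mul1mx ext0_in.
by rewrite /kf !ext0_out.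
Qed.

Lemma char g lam : H g -> Om lam ->
  (forall j f, H f -> ip (Mop j f) g = lam 0 j * ip f g) -> g = kf lam (g 0).
Proof.
move=> hg hl hM; set u := g 0.
pose P q := H (ext0 Om q) /\ ip (ext0 Om q) g = (adjM u *m q lam) 0 0.
have P_ext : forall q1 q2, (forall z, q1 z = q2 z) -> P q1 -> P q2.
  by move=> q1 q2 h; have -> : q2 = q1 by apply/funext => z; rewrite h.
have P_add : forall q1 q2, P q1 -> P q2 -> P (fun z => q1 z + q2 z).
  move=> q1 q2 [h1 e1] [h2 e2].
  have E : ext0 Om (fun z => q1 z + q2 z) = (fun z => ext0 Om q1 z + ext0 Om q2 z).
    apply/funext => z; have [hz|hz] := pselect (Om z).
      by rewrite !ext0_in.
    by rewrite !ext0_out // addr0.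
  rewrite /P E; split; first exact: HD.
  by rewrite ipDl // e1 e2 mulmxDr [RHS]mxE.
have P0 : P (fun _ => 0).
  have E : ext0 Om (fun _ => 0 : 'cV[C]_n) = (fun _ => 0).
    by apply/funext => z; rewrite /ext0; case: asboolP.
  by rewrite /P E; split; [exact: H0 | rewrite ip0l // ?mulmx0 ?mxE].
have P_mp : forall f, mp f -> forall v, P (fun z => f z *: v).
  move=> f; elim => [c|f1 f2 _ h1 _ h2|j f1 hf1 h1] v.
  - split; first by apply: polyH; apply: mp_vec; apply: mpc.
    have hk : H (kf 0 (c *: v)) by apply: kfH.
    rewrite -kf0 (ip_conj hk hg) rep //; exact: (vform_conj (c *: v) (g 0)).
  - by apply: (P_ext _ _ _ (P_add _ _ (h1 v) (h2 v))) => z; rewrite scalerDl.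
  - split; first by apply: polyH; apply: mp_vec; apply: mpX.
    have E : ext0 Om (fun z => (z 0 j * f1 z) *: v) = Mop j (ext0 Om (fun z => f1 z *: v)).
      apply/funext => z; rewrite /Mop; have [hz|hz] := pselect (Om z).
        by rewrite !ext0_in // scalerA.
      by rewrite !ext0_out // scaler0.
    rewrite E hM; last by case: (h1 v).
    by case: (h1 v) => _ ->; rewrite !form_scale mulrA.
have Pq : forall q, vec_polyfun q -> P q.
  move=> q hq.
  have Psum : forall r : seq 'I_n, P (fun z => \sum_(i <- r) q z i 0 *: delta_mx i 0).
    elim => [|i r IH].
      by apply: P_ext P0 => z; rewrite big_nil.
    apply: (P_ext _ _ _ (P_add _ _ (P_mp _ (spf_mp (hq i)) (delta_mx i 0)) IH)).
    by move=> z; rewrite big_cons.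
  by apply: P_ext (Psum (index_enum _)) => z; rewrite [RHS]col_sum_delta.
set h := fsub g (kf lam u).
have hk : H (kf lam u) by apply: (kfH u hl).
have hh : H h by apply: HB.
have h0 : h = (fun _ => 0).
  apply: (ortho_dense (D := fun p => exists q, vec_polyfun q /\ p = ext0 Om q)) => //.
  - by move=> p [q [hq ->]]; apply: polyH.
  - exact: poly_denseN.
  - move=> p [q [hq ->]].
    rewrite ipBr //; last exact: polyH.
    by case: (Pq q hq) => hp ->; rewrite rep // ext0_in // subrr.
apply/funext => z; apply: subr0_eq; have := congr1 (fun F => F z) h0; exact.
Qed.
End Char.
Section Lin.
Variable R : realType.
Local Notation C := R[i].
Variable d : nat.
Variable Om : set 'rV[C]_d.
Variable A : 'M[C]_d.
Hypothesis hA : linAut Om A.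

Lemma lin_unit : A \in unitmx. Proof. by case: hA. Qed.
Lemma lin_fwd z : Om z -> Om (z *m A).
Proof. by case: hA => _ e hz; rewrite -e; exists z. Qed.
Lemma lin_bwd z : Om z -> Om (z *m invmx A).
Proof.
case: hA => hu e hz; move: hz; rewrite -{1}e => -[y hy <-].
by rewrite mulmxK.
Qed.
Lemma lin_bwd_rev z : Om (z *m invmx A) -> Om z.
Proof. by move=> h; have := lin_fwd h; rewrite mulmxKV // lin_unit. Qed.
Lemma lin_out z : ~ Om z -> ~ Om (z *m invmx A).
Proof. by move=> h h'; apply: h; apply: lin_bwd_rev. Qed.
Lemma lin_inv : linAut Om (invmx A).
Proof.
split; first by rewrite unitmx_inv lin_unit.
apply/seteqP; split => z.
  by move=> [y hy <-]; apply: lin_bwd.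
move=> hz; exists (z *m A); first exact: lin_fwd.
by rewrite mulmxK // lin_unit.
Qed.
End Lin.

Section Gam.
Variable R : realType.
Local Notation C := R[i].
Variables (d n : nat).
Local Notation Fn := ('rV[C]_d -> 'cV[C]_n).
Variables (Om : set 'rV[C]_d) (H : set Fn) (ip : Fn -> Fn -> C)
  (K : 'rV[C]_d -> 'rV[C]_d -> 'M[C]_n).
Hypothesis hK : is_RKHS Om H ip K.
Local Notation N := (Nn ip).
Local Notation HD := (HD hK).
Local Notation HZ := (HZ hK).
Local Notation HB := (HB hK).
Local Notation ipDl := (ipDl hK).
Local Notation ipDr := (ipDr hK).
Local Notation ipZl := (ipZl hK).
Local Notation ipZr := (ipZr hK).
Local Notation ipBl := (ipBl hK).
Local Notation ipBr := (ipBr hK).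
Local Notation ipC := (ipC hK).
Local Notation ip0l := (ip0l hK).
Local Notation ip0r := (ip0r hK).
Local Notation ipNE := (ipNE hK).
Local Notation N_ge0 := (N_ge0 hK).
Local Notation N0 := (N0 hK).
Local Notation ip_ge0 := (ip_ge0 hK).
Local Notation ip_def := (ip_def hK).
Local Notation H_out := (H_out hK).
Local Notation H0 := (H0 hK).
Local Notation CS := (CS hK).
Local Notation NDE := (NDE hK).
Local Notation NBE := (NBE hK).
Local Notation Nsub_tri := (Nsub_tri hK).
Local Notation Nsym := (Nsym hK).
Local Notation completeN := (completeN hK).
Local Notation NZ := (NZ hK).
Local Notation ortho_dense := (ortho_dense hK).
Local Notation proj_dense := (proj_dense hK).
Local Notation Nsub_lim := (Nsub_lim hK).
Local Notation hnorm_lt := (hnorm_lt hK).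
Local Notation kf := (kf Om K).
Local Notation kf_in := (kf_in K).
Local Notation kfH := (kfH hK).
Local Notation rep := (rep hK).
Local Notation ip_kk := (ip_kk hK).
Local Notation K_herm := (K_herm hK).
Local Notation ip_conj := (ip_conj hK).
Local Notation fun_eq_forms := (fun_eq_forms hK).

Definition Gam (A : 'M[C]_d) (c : 'M[C]_n) : Fn -> Fn := fun f z => c *m f (z *m invmx A).

Definition QI (A : 'M[C]_d) (c : 'M[C]_n) := forall z w, Om z -> Om w ->
  K z w = c *m K (z *m invmx A) (w *m invmx A) *m adjM c.

Inductive kspan : Fn -> Prop :=
| ks0 : kspan (fun _ => 0)
| ksK w v : Om w -> kspan (kf w v)
| ksD x y : kspan x -> kspan y -> kspan (fun z => x z + y z)
| ksZ (a : C) x : kspan x -> kspan (fun z => a *: x z).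

Lemma ksH x : kspan x -> H x.
Proof.
elim => [|w v hw|x1 x2 _ h1 _ h2|a x1 _ h1].
- exact: H0.
- exact: kfH.
- exact: HD.
- exact: HZ.
Qed.

Lemma ks_sub x y : kspan x -> kspan y -> kspan (fsub x y).
Proof.
move=> hx hy; have -> : fsub x y = (fun z => x z + (-1) *: y z).
  by apply/funext => z; rewrite /fsub scaleN1r.
by apply: ksD => //; apply: ksZ.
Qed.

Lemma ks_dense f : H f -> forall e : R, 0 < e -> exists s, kspan s /\ N (fsub f s) < e.
Proof.
apply: proj_dense.
  split; [exact: ks0 | exact: ksD | exact: ksZ | exact: ksH].
move=> y hy hort; apply: fun_eq_forms => // [|w v hw]; first exact: H0.
have hk := kfH v hw.
by rewrite (ip_conj hy hk) (hort _ (@ksK w v hw)) conjc0 ip0l.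
Qed.

Variables (A : 'M[C]_d) (c : 'M[C]_n).
Hypothesis hA : linAut Om A.
Hypothesis hc : c *m adjM c = 1%:M.
Hypothesis hQ : QI A c.
Local Notation G := (Gam A c).

Lemma hc' : adjM c *m c = 1%:M. Proof. exact: mulmx1C. Qed.

Lemma GD f g : G (fun z => f z + g z) = (fun z => G f z + G g z).
Proof. by apply/funext => z; rewrite /Gam mulmxDr. Qed.
Lemma GZ (a : C) f : G (fun z => a *: f z) = (fun z => a *: G f z).
Proof. by apply/funext => z; rewrite /Gam scalemxAr. Qed.
Lemma G0 : G (fun _ => 0) = (fun _ => 0).
Proof. by apply/funext => z; rewrite /Gam mulmx0. Qed.
Lemma GB f g : G (fsub f g) = fsub (G f) (G g).
Proof. by apply/funext => z; rewrite /Gam /fsub mulmxBr. Qed.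

Lemma G_kf w v : Om w -> G (kf w v) = kf (w *m A) (c *m v).
Proof.
move=> hw; have hu := lin_unit hA.
apply/funext => z; rewrite /Gam; have [hz|hz] := pselect (Om z).
  have hz' := lin_bwd hA hz.
  rewrite (kf_in _ _ hz') (kf_in _ _ hz) (hQ hz (lin_fwd hA hw)) mulmxK //.
  by rewrite -!mulmxA (mulmxA (adjM c)) hc' mul1mx.
by rewrite /kf !ext0_out ?mulmx0 //; apply: lin_out.
Qed.

Lemma ks_G x : kspan x -> kspan (G x).
Proof.
elim => [|w v hw|x1 x2 _ h1 _ h2|a x1 _ h1].
- by rewrite G0; apply: ks0.
- by rewrite G_kf //; apply: ksK; apply: lin_fwd.
- by rewrite GD; apply: ksD.
- by rewrite GZ; apply: ksZ.
Qed.

Lemma ipGk f w v : H f -> H (G f) -> Om w -> ip (G f) (G (kf w v)) = ip f (kf w v).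
Proof.
move=> hf hGf hw; rewrite G_kf // rep //; last exact: lin_fwd.
rewrite rep // /Gam mulmxK; last exact: (lin_unit hA).
by rewrite (adjM_mul c v) -mulmxA (mulmxA (adjM c)) hc' mul1mx.
Qed.

Lemma iso_ks f t : H f -> H (G f) -> kspan t -> ip (G f) (G t) = ip f t.
Proof.
move=> hf hGf; elim => [|w v hw|x1 x2 k1 h1 k2 h2|a x1 k1 h1].
- by rewrite G0 !ip0r.
- exact: ipGk.
- rewrite GD !ipDr ?h1 ?h2 //; try exact: ksH; exact: ksH (ks_G _).
- rewrite GZ !ipZr ?h1 //; try exact: ksH; exact: ksH (ks_G _).
Qed.
Lemma sq_add (p q : C) : sq (p + q) <= 2%:R * sq p + 2%:R * sq q.
Proof. case: p => a b; case: q => x y; rewrite /sq /=. have := sqr_ge0 (a - x); have := sqr_ge0 (b - y); nra. Qed.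

Lemma lim_eq a b k1 k2 (x y : nat -> Fn) : H a -> H b -> H k1 -> H k2 ->
  (forall k, H (x k)) -> (forall k, H (y k)) ->
  tends0 (fun k => N (fsub (x k) a)) -> tends0 (fun k => N (fsub (y k) b)) ->
  (forall k, ip (x k) k1 = ip (y k) k2) -> ip a k1 = ip b k2.
Proof.
move=> ha hb hk1 hk2 hx hy tx ty hxy.
apply/eqP; rewrite -subr_eq0; apply/eqP; apply: sq0.
apply/eqP; rewrite eq_le sq_ge0 andbT; apply/ler_addgt0Pr => e he; rewrite add0r.
set M1 := N k1 + 1; set M2 := N k2 + 1.
have n1 := N_ge0 hk1; have n2 := N_ge0 hk2.
have hM1 : 0 < M1 by rewrite /M1; lra.
have hM2 : 0 < M2 by rewrite /M2; lra.
have [N1 h1] := tx (e / (4%:R * M1)) (ltac:(by rewrite divr_gt0 // mulr_gt0 // ltr0n)).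
have [N2 h2] := ty (e / (4%:R * M2)) (ltac:(by rewrite divr_gt0 // mulr_gt0 // ltr0n)).
set k := maxn N1 N2.
have {h1} h1 := h1 k (leq_maxl _ _).
have {h2} h2 := h2 k (leq_maxr _ _).
have E : ip a k1 - ip b k2 = ip (fsub a (x k)) k1 + ip (fsub (y k) b) k2.
  by rewrite !ipBl // hxy; ring.
rewrite E.
apply: le_trans (sq_add _ _) _.
have c1 := CS (HB ha (hx k)) hk1.
have c2 := CS (HB (hy k) hb) hk2.
rewrite Nsym // in c1.
set P := N (fsub (x k) a) in h1 c1; set Q := N (fsub (y k) b) in h2 c2.
have P0 : 0 <= P by apply: N_ge0; apply: HB.
have Q0 : 0 <= Q by apply: N_ge0; apply: HB.
rewrite ltr_pdivlMr ?mulr_gt0 ?ltr0n // in h1.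
rewrite ltr_pdivlMr ?mulr_gt0 ?ltr0n // in h2.
have h3 : P * N k1 <= P * M1 by apply: ler_wpM2l => //; rewrite /M1; lra.
have h4 : Q * N k2 <= Q * M2 by apply: ler_wpM2l => //; rewrite /M2; lra.
lra.
Qed.

Lemma form_c (v x : 'cV[C]_n) : (adjM v *m (c *m x)) 0 0 = (adjM (adjM c *m v) *m x) 0 0.
Proof. by rewrite adjM_mul adjMK mulmxA. Qed.

Lemma NG x : kspan x -> N (G x) = N x.
Proof.
move=> hx; rewrite /Nn iso_ks //; first exact: ksH.
exact: ksH (ks_G hx).
Qed.

Lemma G_main f : H f -> H (G f) /\ exists s : nat -> Fn, (forall k, kspan (s k)) /\
  tends0 (fun k => N (fsub (G (s k)) (G f))) /\ tends0 (fun k => N (fsub (s k) f)).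
Proof.
move=> hf; have hu := lin_unit hA.
have [s hs] := choice (fun k => ks_dense hf (inv_pos R k)).
have sK k : kspan (s k) by case: (hs k).
have sH k : H (s k) by apply: ksH.
have sGH k : H (G (s k)) by apply: ksH; apply: ks_G.
have sN k : N (fsub (s k) f) < ik R k by rewrite Nsym //; case: (hs k).
have ts : tends0 (fun k => N (fsub (s k) f)).
  move=> e he; have [N1 hN1] := arch he; exists N1 => k hk.
  by apply: lt_trans (sN k) _; apply: hN1.
have [g [hg tg]] : exists g, H g /\ tends0 (fun k => N (fsub (G (s k)) g)).
  apply: completeN => // e he.
  have [N1 hN1] := arch (ltac:(by rewrite divr_gt0 // ltr0n) : 0 < e / 4%:R).
  exists N1 => k l hk hl.
  rewrite -GB NG; last by apply: ks_sub.
  have := Nsub_tri (sH k) hf (sH l) ltr01.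
  rewrite invr1 (Nsym hf (sH l)).
  have := sN k; have := sN l; have := hN1 k hk; have := hN1 l hl.
  move=> q1 q2 q3 q4 q5; lra.
have gG : g = G f.
  apply/funext => z; have [hz|hz] := pselect (Om z).
    have hz' := lin_bwd hA hz.
    apply: vec_forms_eq => v.
    rewrite -rep // /Gam form_c -rep //.
    apply: (lim_eq (x := fun k => G (s k)) (y := s)) => //; try exact: kfH.
    move=> k; rewrite !rep //; first by rewrite /Gam form_c.
  by rewrite H_out // /Gam H_out ?mulmx0 //; apply: lin_out.
rewrite -gG; split => //; exists s; split => //; split => //.
Qed.

Lemma G_iso f h : H f -> H h -> ip (G f) (G h) = ip f h.
Proof.
move=> hf hh.
have [hGf _] := G_main hf.
have [hGh [s [sK [t1 t2]]]] := G_main hh.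
have sH k : H (s k) by apply: ksH.
have sGH k : H (G (s k)) by apply: ksH; apply: ks_G.
rewrite ip_conj // [RHS]ip_conj //; congr conjc.
apply: (lim_eq (x := fun k => G (s k)) (y := s)) => // k.
by rewrite ip_conj // iso_ks // -ip_conj.
Qed.
End Gam.
Lemma kM_eq (R : realType) d n (A : 'M[R[i]]_d) j (X : 'rV[R[i]]_d -> 'cV[R[i]]_n) y :
  kM A j X y = (y *m A) 0 j *: X y.
Proof.
rewrite /kM /Mop; under eq_bigr do rewrite scalerA.
rewrite -scaler_suml; congr (_ *: _); rewrite mxE; apply: eq_bigr => i _; by rewrite mulrC.
Qed.

Lemma GsG (R : realType) d n (A : 'M[R[i]]_d) (c : 'M[R[i]]_n) h :
  A \in unitmx -> adjM c *m c = 1%:M -> Gam (invmx A) (adjM c) (Gam A c h) = h.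
Proof.
move=> hu hc; apply/funext => z; rewrite /Gam invmxK mulmxK // mulmxA hc mul1mx //.
Qed.

Lemma GGs (R : realType) d n (A : 'M[R[i]]_d) (c : 'M[R[i]]_n) h :
  A \in unitmx -> c *m adjM c = 1%:M -> Gam A c (Gam (invmx A) (adjM c) h) = h.
Proof.
move=> hu hc; apply/funext => z; rewrite /Gam invmxK mulmxKV // mulmxA hc mul1mx //.
Qed.

Section Main.
Variable R : realType.
Local Notation C := R[i].
Variables (d n : nat).
Local Notation Fn := ('rV[C]_d -> 'cV[C]_n).
Variables (Om : set 'rV[C]_d) (H : set Fn) (ip : Fn -> Fn -> C)
  (K : 'rV[C]_d -> 'rV[C]_d -> 'M[C]_n).
Hypothesis hK : is_RKHS Om H ip K.
Local Notation N := (Nn ip).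
Local Notation HD := (HD hK).
Local Notation HZ := (HZ hK).
Local Notation HB := (HB hK).
Local Notation ipDl := (ipDl hK).
Local Notation ipDr := (ipDr hK).
Local Notation ipZl := (ipZl hK).
Local Notation ipZr := (ipZr hK).
Local Notation ipBl := (ipBl hK).
Local Notation ipBr := (ipBr hK).
Local Notation ipC := (ipC hK).
Local Notation ip0l := (ip0l hK).
Local Notation ip0r := (ip0r hK).
Local Notation ipNE := (ipNE hK).
Local Notation N_ge0 := (N_ge0 hK).
Local Notation N0 := (N0 hK).
Local Notation ip_ge0 := (ip_ge0 hK).
Local Notation ip_def := (ip_def hK).
Local Notation H_out := (H_out hK).
Local Notation H0 := (H0 hK).
Local Notation CS := (CS hK).
Local Notation NDE := (NDE hK).
Local Notation NBE := (NBE hK).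
Local Notation Nsub_tri := (Nsub_tri hK).
Local Notation Nsym := (Nsym hK).
Local Notation completeN := (completeN hK).
Local Notation NZ := (NZ hK).
Local Notation ortho_dense := (ortho_dense hK).
Local Notation proj_dense := (proj_dense hK).
Local Notation Nsub_lim := (Nsub_lim hK).
Local Notation hnorm_lt := (hnorm_lt hK).
Local Notation kf := (kf Om K).
Local Notation kf_in := (kf_in K).
Local Notation kfH := (kfH hK).
Local Notation rep := (rep hK).
Local Notation ip_kk := (ip_kk hK).
Local Notation K_herm := (K_herm hK).
Local Notation ip_conj := (ip_conj hK).
Local Notation fun_eq_forms := (fun_eq_forms hK).
Local Notation G_iso := (G_iso hK).
Local Notation G_main := (G_main hK).
Local Notation QI := (QI Om K).

Hypothesis hP : poly_dense Om H ip.
Hypothesis Om0 : Om 0.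
Hypothesis hn : forall z, Om z -> K z 0 = 1%:M.
Hypothesis hMb : M_bounded H ip.

Lemma ip_ext_r a b : H a -> H b -> (forall x, H x -> ip x a = ip x b) -> a = b.
Proof.
move=> ha hb h.
have hD : H (fsub a b) by apply: HB.
have : fsub a b = (fun _ => 0) by apply: ip_def => //; rewrite ipBr // h // subrr.
move=> e; apply/funext => z; apply: subr0_eq; have := congr1 (fun F => F z) e; exact.
Qed.

Lemma lin_sum (I : Type) (T : Fn -> Fn) :
  (forall f g, H f -> H g -> T (fun z => f z + g z) = (fun z => T f z + T g z)) ->
  (forall (a : C) f, H f -> T (fun z => a *: f z) = (fun z => a *: T f z)) ->
  forall (r : seq I) (a : I -> C) (x : I -> Fn), (forall i, H (x i)) ->
  H (fun z => \sum_(i <- r) a i *: x i z) /\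
  T (fun z => \sum_(i <- r) a i *: x i z) = (fun z => \sum_(i <- r) a i *: T (x i) z).
Proof.
move=> TD TZ r a x hx; elim: r => [|i r [IH1 IH2]].
  have -> : (fun z => \sum_(i <- [::]) a i *: x i z) = (fun z => 0 *: (fun _ => 0 : 'cV[C]_n) z).
    by apply/funext => z; rewrite big_nil scale0r.
  split; first by apply: HZ; apply: H0.
  by rewrite TZ; last exact: H0; apply/funext => z; rewrite big_nil scale0r.
have -> : (fun z => \sum_(j <- i :: r) a j *: x j z) = (fun z => a i *: x i z + \sum_(j <- r) a j *: x j z).
  by apply/funext => z; rewrite big_cons.
split; first by apply: HD => //; apply: HZ.
rewrite TD ?IH2 ?TZ //; last by apply: HZ.
by apply/funext => z; rewrite big_cons.
Qed.

Lemma QI_inv A c : linAut Om A -> c *m adjM c = 1%:M -> QI A c -> QI (invmx A) (adjM c).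
Proof.
move=> hA hc hQ z w hz hw; have hu := lin_unit hA.
rewrite invmxK adjMK (hQ _ _ (lin_fwd hA hz) (lin_fwd hA hw)) !mulmxK //.
by rewrite !mulmxA (hc' hc) mul1mx -mulmxA (hc' hc) mulmx1.
Qed.

Lemma Gam_unitary A c : linAut Om A -> c *m adjM c = 1%:M -> QI A c -> unitary_op H ip (Gam A c).
Proof.
move=> hA hc hQ; have hu := lin_unit hA.
have hA' := lin_inv hA.
have hc2 : adjM c *m adjM (adjM c) = 1%:M by rewrite adjMK hc'.
have hQ' := QI_inv hA hc hQ.
split.
- by move=> f hf; case: (G_main hA hc hQ hf).
- by move=> f g _ _; apply: GD.
- by move=> a f _; apply: GZ.
- by move=> f g hf hg; apply: G_iso.
- move=> g hg; exists (Gam (invmx A) (adjM c) g); split.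
    by case: (G_main hA' hc2 hQ' hg).
  exact: GGs.
Qed.

Definition cond2 := exists c : 'M[C]_d -> 'rV[C]_d -> 'M[C]_n,
         (forall A, linAut Om A -> forall z, Om z -> unitary_mx (c A z)) /\
         (forall A, linAut Om A -> forall z z', Om z -> Om z' -> c A z = c A z') /\
         quasi_invariant Om K c.
Definition cond3 := exists c : 'M[C]_d -> 'M[C]_n,
         forall A, linAut Om A ->
           unitary_mx (c A) /\ unitary_op H ip (fun f z => c A *m f (z *m invmx A)).

Lemma dir23 : cond2 -> cond3.
Proof.
move=> [c [hu [hcst hqi]]]; exists (fun A => c A 0) => A hA.
have hU := hu A hA 0 Om0.
split => //.
apply: (Gam_unitary hA hU) => z w hz hw.
rewrite (hqi A hA z w hz hw) (hcst A hA z 0 hz Om0) (hcst A hA w 0 hw Om0) //.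
Qed.

Lemma dir32 : cond3 -> cond2.
Proof.
move=> [c hc]; exists (fun A _ => c A); split; first by move=> A hA z _; case: (hc A hA).
split => // A hA z w hz hw.
have [hU [hH hD hZ hI hS]] := hc A hA.
have hU' := hc' hU.
have hu := lin_unit hA.
have hw' := lin_bwd hA hw.
have hz' := lin_bwd hA hz.
apply: mx_forms_eq => v v'; rewrite -!mulmxA; congr ((_ *m _) 0 0).
have hk := kfH v hw.
have [f [hf hGf]] := hS _ hk.
set k' := kf (w *m invmx A) (adjM (c A) *m v).
have hk' : H k' by apply: kfH.
have fk : f = k'.
  apply: ip_ext_r => // x hx.
  rewrite -hI // hGf (rep v hw (hH x hx)) (rep _ hw' hx).
  by rewrite form_c.
have := congr1 (fun F => F z) hGf.
by rewrite fk /k' kf_in // /Gam kf_in // => <-.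
Qed.

Lemma dir31 : cond3 -> K_homogeneous Om H ip.
Proof.
move=> [c hc] A hA.
have [hU [hH hD hZ hI hS]] := hc A hA.
have hU' := hc' hU.
have hu := lin_unit hA.
exists (Gam A (c A)), (Gam (invmx A) (adjM (c A))).
split; first by split.
have GsH : forall f, H f -> H (Gam (invmx A) (adjM (c A)) f).
  by move=> f hf; have [h [hh <-]] := hS f hf; rewrite GsG.
split => //; split.
  move=> f g hf hg; have [h [hh <-]] := hS g hg; rewrite GsG //.
  exact: hI.
move=> j f hf; apply/funext => z.
rewrite /Gam kM_eq mulmxKV // invmxK mulmxKV //.
by rewrite -scalemxAr mulmxA hU mul1mx.
Qed.
Lemma dir12_A A (hA : linAut Om A) (G Gs : Fn -> Fn) :
  unitary_op H ip G -> (forall f, H f -> H (Gs f)) ->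
  (forall f g, H f -> H g -> ip (G f) g = ip f (Gs g)) ->
  (forall j f, H f -> G (kM A j (Gs f)) = Mop j f) ->
  exists cA : 'M[C]_n, unitary_mx cA /\ QI A cA.
Proof.
move=> [hH hD hZ hI hS] hGs hadj hint.
have hu := lin_unit hA.
set B := invmx A.
have MopH j f : H f -> H (Mop j f) by move=> hf; case: (hMb j) => h _; apply: h.
have GsG h : H h -> Gs (G h) = h.
  move=> hh; apply: ip_ext_r => //; first by apply: hGs; apply: hH.
  by move=> x hx; rewrite -hadj ?hI //; apply: hH.
have GGs f : H f -> G (Gs f) = f by move=> hf; have [h [hh <-]] := hS f hf; rewrite GsG.
have Gs_iso a b : H a -> H b -> ip (Gs a) (Gs b) = ip a b.
  by move=> ha hb; rewrite -hadj; [rewrite GGs | exact: hGs | ].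
have GsD : forall a b, H a -> H b -> Gs (fun z => a z + b z) = (fun z => Gs a z + Gs b z).
  move=> a b ha hb; apply: ip_ext_r; [by apply: hGs; apply: HD | by apply: HD; apply: hGs |].
  move=> x hx; rewrite -hadj ?ipDr ?hadj //; try (by apply: hH); try (by apply: HD); by apply: hGs.
have GsZ : forall (al : C) b, H b -> Gs (fun z => al *: b z) = (fun z => al *: Gs b z).
  move=> al b hb; apply: ip_ext_r; [by apply: hGs; apply: HZ | by apply: HZ; apply: hGs |].
  move=> x hx; rewrite -hadj ?ipZr ?hadj //; try (by apply: hH); try (by apply: HZ); by apply: hGs.
have GMop l h : H h -> G (Mop l h) = (fun z => (z *m B) 0 l *: G h z).
  move=> hh.
  have kMH : forall j, H (kM A j h).
    by move=> j; case: (lin_sum hD hZ (index_enum 'I_d) (fun i => A i j) (x := fun i => Mop i h) (fun i => MopH i h hh)).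
  have e1 : Mop l h = (fun z => \sum_(j <- index_enum 'I_d) B j l *: kM A j h z).
    apply/funext => z; rewrite /Mop; under eq_bigr do rewrite kM_eq scalerA.
    rewrite -scaler_suml; congr (_ *: _).
    have := congr1 (fun M : 'rV[C]_d => M 0 l) (mulmxK hu z); rewrite /= => {1}<-.
    by rewrite mxE; apply: eq_bigr => j _; rewrite mulrC.
  rewrite e1 (lin_sum hD hZ (index_enum 'I_d) (fun j => B j l) (x := fun j => kM A j h) kMH).2.
  apply/funext => z.
  have hGk : forall j, G (kM A j h) = Mop j (G h).
    by move=> j; rewrite -{1}(GsG h hh) hint //; apply: hH.
  under eq_bigr => j _ do rewrite hGk.
  rewrite /Mop; under eq_bigr do rewrite scalerA.
  rewrite -scaler_suml; congr (_ *: _); rewrite mxE; apply: eq_bigr => j _; by rewrite mulrC.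
have char_app w v : Om w -> Gs (kf w v) = kf (w *m B) (Gs (kf w v) 0).
  move=> hw; apply: (char hK hP Om0 hn); [by apply: hGs; apply: kfH | exact: lin_bwd |].
  move=> j f hf.
  rewrite -hadj; [|exact: MopH|exact: kfH].
  rewrite (rep v hw (hH _ (MopH j f hf))) GMop // form_scale.
  by rewrite -(rep v hw (hH _ hf)) hadj //; apply: kfH.
have kf_sum w v : Om w -> kf w v = (fun z => \sum_(j <- index_enum 'I_n) v j 0 *: kf w (delta_mx j 0) z).
  move=> hw; apply/funext => z; have [hz|hz] := pselect (Om z).
    rewrite kf_in // {1}(col_sum_delta v) mulmx_sumr; apply: eq_bigr => j _.
    by rewrite kf_in // scalemxAr.
  rewrite /kf ext0_out // big1 // => j _; by rewrite ext0_out // scaler0.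
pose Phi w := \matrix_(i < n, j < n) (Gs (kf w (delta_mx j 0)) 0) i 0.
have PhiE w v : Om w -> Gs (kf w v) 0 = Phi w *m v.
  move=> hw; rewrite (kf_sum w v hw).
  rewrite (lin_sum GsD GsZ (index_enum 'I_n) (fun j => v j 0) (x := fun j => kf w (delta_mx j 0)) (fun j => kfH _ hw)).2 /=.
  apply/matrixP => i k; rewrite (ord1 k) summxE !mxE; apply: eq_bigr => j _.
  by rewrite !mxE mulrC.
have ca w v : Om w -> Gs (kf w v) = kf (w *m B) (Phi w *m v).
  by move=> hw; rewrite -PhiE // -char_app.
have ident z w : Om z -> Om w -> K z w = adjM (Phi z) *m K (z *m B) (w *m B) *m Phi w.
  move=> hz hw; apply: mx_forms_eq => v v'.
  rewrite -ip_kk // -Gs_iso; [|exact: kfH|exact: kfH].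
  rewrite (ca w v hw) (ca z v' hz) ip_kk; try exact: lin_bwd.
  by rewrite adjM_mul !mulmxA.
have I0 : adjM (Phi 0) *m Phi 0 = 1%:M.
  by have := ident 0 0 Om0 Om0; rewrite mul0mx !hn // mulmx1 => <-.
have I0' := mulmx1C I0.
have Pz z : Om z -> adjM (Phi z) = adjM (Phi 0).
  move=> hz; have := ident z 0 hz Om0; rewrite mul0mx !hn ?mulmx1 //; last exact: lin_bwd.
  move=> e; rewrite -[LHS]mulmx1 -I0' mulmxA -e mul1mx //.
have Pz' z : Om z -> Phi z = Phi 0.
  by move=> hz; rewrite -[LHS]adjMK Pz // adjMK.
exists (adjM (Phi 0)); split; first by rewrite /unitary_mx adjMK.
move=> z w hz hw; rewrite ident // Pz // Pz' // adjMK //.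
Qed.

Lemma dir12 : K_homogeneous Om H ip -> cond2.
Proof.
move=> hKH.
have : forall A, exists cA : 'M[C]_n, linAut Om A -> unitary_mx cA /\ QI A cA.
  move=> A; have [hA|hA] := pselect (linAut Om A); last by exists 0.
  have [G [Gs [hU [hGs [hadj hint]]]]] := hKH A hA.
  have [cA hcA] := dir12_A hA hU hGs hadj hint.
  by exists cA.
move/choice => [cf hcf].
exists (fun A _ => cf A); split; first by move=> A hA z _; case: (hcf A hA).
split => // A hA z w hz hw.
by case: (hcf A hA) => _ h; apply: h.
Qed.
End Main.

Unset Implicit Arguments.
Theorem lemma2p2 (R : realType) (d n : nat) (Omega : set 'rV[R[i]]_d)
  (H : set ('rV[R[i]]_d -> 'cV[R[i]]_n))
  (ip : ('rV[R[i]]_d -> 'cV[R[i]]_n) -> ('rV[R[i]]_d -> 'cV[R[i]]_n) -> R[i])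
  (K : 'rV[R[i]]_d -> 'rV[R[i]]_d -> 'M[R[i]]_n) :
  irreducible_BSD Omega ->
  circular_at_0 Omega ->
  is_RKHS Omega H ip K ->
  poly_dense Omega H ip ->
  M_bounded H ip ->
  (forall z, Omega z -> K z 0 = 1%:M) ->
  [/\ (* (1) <-> (2) *)
      K_homogeneous Omega H ip <->
      (exists c : 'M[R[i]]_d -> 'rV[R[i]]_d -> 'M[R[i]]_n,
         (forall A, linAut Omega A -> forall z, Omega z -> unitary_mx (c A z)) /\
         (forall A, linAut Omega A -> forall z z', Omega z -> Omega z' ->
            c A z = c A z') /\
         quasi_invariant Omega K c)
    & (* (2) <-> (3) *)
      (exists c : 'M[R[i]]_d -> 'rV[R[i]]_d -> 'M[R[i]]_n,
         (forall A, linAut Omega A -> forall z, Omega z -> unitary_mx (c A z)) /\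
         (forall A, linAut Omega A -> forall z z', Omega z -> Omega z' ->
            c A z = c A z') /\
         quasi_invariant Omega K c) <->
      (exists c : 'M[R[i]]_d -> 'M[R[i]]_n,
         forall A, linAut Omega A ->
           unitary_mx (c A) /\
           unitary_op H ip (fun f z => c A *m f (z *m invmx A)))].
Proof.
move=> _ hcirc hK hP hMb hn.
have Om0 : Omega 0 by case: hcirc.
split; split.
- exact: (dir12 hK hP Om0 hn hMb).
- by move=> h2; apply: dir31; apply: (dir23 hK Om0).
- exact: (dir23 hK Om0).
- exact: (dir32 hK).
Qed.
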